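(* Let $(\Theta,\mathcal F,\nu)$ be a measure space (with $\Theta$ discrete or continuous), and for each $\vartheta\in\Theta$ let $(V_{n,k}(\vartheta))_{1\le k\le n}$ and $(W_s(\vartheta))_{s\ge1}$ be nonnegative, measurable in $\vartheta$. Suppose that for each $n$, $\Pi_n$ is a finitely exchangeable random partition of $[n]$ whose EPPF is $$p^{(n)}(n_1,\dots,n_k)=\int_\Theta V_{n,k}(\vartheta)\prod_{j=1}^kW_{n_j}(\vartheta)\,\nu(d\vartheta)$$ (a mixture of Gibbs partitions). Then for every $n\ge1$: if $(W_s(\vartheta))_{s\ge1}$ is log-convex for each $\vartheta\in\Theta$, then $p^{(n)}$ is balance-averse; if $(W_s(\vartheta))_{s\ge1}$ is log-concave for each $\vartheta\in\Theta$, then $p^{(n)}$ is balance-seeking.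
   Context: For positive integers $k\le n$, $\mathcal I_n^k$ denotes the set of nonincreasing $k$-tuples $\mathbf n=(n_1,\dots,n_k)$ of positive integers with $\sum_jn_j=n$. For $\mathbf n,\mathbf n'\in\mathcal I_n^k$ write $\mathbf n\prec\mathbf n'$ if $\mathbf n\neq\mathbf n'$ and $\sum_{j=1}^J n_j\ge\sum_{j=1}^J n'_j$ for all $J=1,\dots,k$. The EPPF of a finitely exchangeable (i.e. permutation-invariant in law) random partition $\Pi_n$ of $[n]$ is the symmetric function $p^{(n)}$ with $\mathbb P(\Pi_n=\{S_1,\dots,S_k\})=p^{(n)}(|S_1|,\dots,|S_k|)$. It is balance-averse if for all $k\le n$ and $\mathbf n,\mathbf n'\in\mathcal I^k_n$, $\mathbf n\prec\mathbf n'$ implies $p^{(n)}(\mathbf n)\ge p^{(n)}(\mathbf n')$, and balance-seeking if it implies $p^{(n)}(\mathbf n)\le p^{(n)}(\mathbf n')$. A sequence $(W_s)_{s\ge1}$ is log-convex if $W_s^2\le W_{s-1}W_{s+1}$ for all $s\ge2$, and log-concave if $W_s^2\ge W_{s-1}W_{s+1}$ for all $s\ge2$ and it has no internal zeros (no $a<b<c$ with $W_a>0,W_b=0,W_c>0$). *)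

(* Defs.v *)
From HB Require Import structures.
From mathcomp Require Import all_boot all_order all_algebra.
From mathcomp Require Import all_classical all_reals all_analysis.
Set Implicit Arguments. Unset Strict Implicit. Unset Printing Implicit Defensive.
Import Order.TTheory GRing.Theory Num.Theory.
Local Open Scope ring_scope.

Definition Ink (n k : nat) (ns : seq nat) : bool :=
  [&& size ns == k, sorted geq ns, all (fun x => 0 < x)%N ns & sumn ns == n].

Definition prec (k : nat) (ns ns' : seq nat) : Prop :=
  ns <> ns' /\ forall J : nat, (1 <= J <= k)%N -> (sumn (take J ns') <= sumn (take J ns))%N.

Definition balance_averse (R : realType) (n : nat) (p : seq nat -> \bar R) : Prop :=
  forall k ns ns', (1 <= k <= n)%N -> Ink n k ns -> Ink n k ns' -> prec k ns ns' ->
    (p ns' <= p ns)%E.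

Definition balance_seeking (R : realType) (n : nat) (p : seq nat -> \bar R) : Prop :=
  forall k ns ns', (1 <= k <= n)%N -> Ink n k ns -> Ink n k ns' -> prec k ns ns' ->
    (p ns <= p ns')%E.

Definition log_convex (R : realType) (W : nat -> R) : Prop :=
  forall s, (2 <= s)%N -> W s ^+ 2 <= W s.-1 * W s.+1.

Definition log_concave (R : realType) (W : nat -> R) : Prop :=
  (forall s, (2 <= s)%N -> W s.-1 * W s.+1 <= W s ^+ 2) /\
  (forall a b c, (1 <= a)%N -> (a < b)%N -> (b < c)%N ->
     ~ (0 < W a /\ W b = 0 /\ 0 < W c)).

Definition block_sizes (n : nat) (pi : {set {set 'I_n}}) : seq nat :=
  sort geq [seq #|B| | B : {set 'I_n} <- enum pi].

Definition random_partition_with_EPPF (R : realType) (n : nat)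
    (p : seq nat -> \bar R) : Prop :=
  exists P : {set {set 'I_n}} -> R,
    [/\ forall pi, 0 <= P pi,
        \sum_(pi : {set {set 'I_n}}) P pi = 1,
        forall pi : {set {set 'I_n}}, ~~ finset.partition pi [set: 'I_n]%SET -> P pi = 0
      & forall pi : {set {set 'I_n}}, finset.partition pi [set: 'I_n]%SET -> (P pi)%:E = p (block_sizes pi)].

Definition gibbs_mixture_eppf (R : realType) (d : measure_display)
    (T : measurableType d) (nu : {measure set T -> \bar R})
    (V : nat -> nat -> T -> R) (W : nat -> T -> R) (n : nat) (ns : seq nat) : \bar R :=
  (\int[nu]_(th in [set: T]) (V n (size ns) th * \prod_(j <- ns) W j th)%:E)%E.

(* Main.v *)
Require Import Defs.
From HB Require Import structures.
From mathcomp Require Import all_boot all_order all_algebra.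
From mathcomp Require Import all_classical all_reals all_analysis.
From mathcomp Require Import measurable_realfun.
From mathcomp Require Import ring lra zify.
Set Implicit Arguments. Unset Strict Implicit. Unset Printing Implicit Defensive.
Import Order.TTheory GRing.Theory Num.Theory.
Local Open Scope ring_scope.


Section N.
Local Open Scope nat_scope.

Lemma sorted_geq_all x s : sorted geq (x :: s) -> all (fun y => y <= x) s.
Proof.
elim: s x => //= y s IH x /andP[hxy hp].
rewrite hxy /=.
have := IH y hp; apply: sub_all => z /= hz; exact: leq_trans hz hxy.
Qed.

Lemma posb (b : seq nat) t : sorted geq b ->
  exists J, J <= size b /\ \sum_(x <- b) (x - t) + J * t = sumn (take J b).
Proof.
elim: b => [|x b IH] hs; first by exists 0; rewrite big_nil.
have hb : sorted geq b by move: hs; exact: path_sorted.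
case: (leqP x t) => hxt.
- exists 0; split => //.
  rewrite mul0n addn0 take0 /=; apply/eqP; rewrite sum_nat_seq_eq0 /=.
  rewrite subn_eq0 hxt /=.
  have := sorted_geq_all hs; apply: sub_all => z /= hz.
  rewrite subn_eq0; exact: leq_trans hz hxt.
- have [J [hJ hJe]] := IH hb.
  exists J.+1; split => //=.
  rewrite big_cons; lia.
Qed.

Lemma posa (a : seq nat) t J : sumn (take J a) <= \sum_(x <- a) (x - t) + J * t.
Proof.
elim: a J => [|x a IH] J; first by [].
case: J => [|J] /=; first by [].
rewrite big_cons; have := IH J; lia.
Qed.

Lemma maj_pos (a b : seq nat) :
  sorted geq b ->
  (forall J, 1 <= J <= size b -> sumn (take J b) <= sumn (take J a)) ->
  forall t, \sum_(x <- b) (x - t) <= \sum_(x <- a) (x - t).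
Proof.
move=> hs hJ t; have [J [hJs hJe]] := posb t hs.
have := posa a t J.
case: J hJs hJe => [|J] hJs hJe.
- move: hJe; rewrite take0 /=; lia.
- have := hJ J.+1; rewrite hJs /=; move=> /(_ isT); lia.
Qed.

Lemma ident (s : seq nat) t :
  \sum_(x <- s) (x - t) + size s * t = \sum_(x <- s) (t - x) + sumn s.
Proof.
elim: s => [|x s IH]; first by rewrite !big_nil.
rewrite !big_cons /=; lia.
Qed.

Lemma maj_up (a b : seq nat) U :
  (forall t, \sum_(x <- b) (x - t) <= \sum_(x <- a) (x - t)) ->
  all (fun x => x <= U) a -> all (fun x => x <= U) b.
Proof.
move=> h ha.
have h0 : \sum_(x <- a) (x - U) = 0.
  apply/eqP; rewrite sum_nat_seq_eq0; apply: sub_all ha => x /=; rewrite subn_eq0.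
  done.
have := h U; rewrite h0 leqn0 sum_nat_seq_eq0.
apply: sub_all => x /=; by rewrite subn_eq0.
Qed.

Lemma maj_low (a b : seq nat) L :
  size a = size b -> sumn a = sumn b ->
  (forall t, \sum_(x <- b) (x - t) <= \sum_(x <- a) (x - t)) ->
  all (fun x => L <= x) a -> all (fun x => L <= x) b.
Proof.
move=> hsz hsum h ha.
have h0 : \sum_(x <- a) (L - x) = 0.
  apply/eqP; rewrite sum_nat_seq_eq0; apply: sub_all ha => x /=; rewrite subn_eq0.
  done.
have e1 := ident a L; have e2 := ident b L; have hL := h L.
rewrite hsz in e1.
have : \sum_(x <- b) (L - x) = 0 by lia.
move/eqP; rewrite sum_nat_seq_eq0.
by apply: sub_all => x /=; rewrite subn_eq0.
Qed.

Lemma sum_ge_size (s : seq nat) : all (fun x => 0 < x) s -> size s <= sumn s.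
Proof. elim: s => //= x s IH /andP[h1 h2]; have := IH h2; lia. Qed.

Lemma all_one (s : seq nat) : all (fun x => 0 < x) s -> sumn s = size s ->
  s = nseq (size s) 1.
Proof.
elim: s => //= x s IH /andP[h1 h2] he.
have := sum_ge_size h2 => hs.
have hx : x = 1 by lia.
rewrite hx (IH h2) ?size_nseq //; lia.
Qed.

Lemma minmax (s : seq nat) : s != [::] ->
  exists L U, [/\ L \in s, U \in s & all (fun x => L <= x <= U) s].
Proof.
elim: s => //= x s IH _.
case: (eqVneq s [::]) => [->|hne].
- by exists x, x; rewrite !inE eqxx leqnn.
- have [L [U [hL hU ha]]] := IH hne.
  exists (minn x L), (maxn x U); split.
  + rewrite inE; case: (leqP x L) => h; first by rewrite eqxx.
    by rewrite hL orbT.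
  + rewrite inE; case: (leqP x U) => h; first by rewrite hU orbT.
    by rewrite eqxx.
  + rewrite /= geq_minl leq_maxl /=.
    apply: sub_all ha => y /= /andP[h1 h2]; apply/andP; split; lia.
Qed.
End N.

Section K.
Variables (R : realType) (g : nat -> R) (L U : nat).
Let d := g L.+1 - g L.
Let c t := g t.+1 - g t - (g t - g t.-1).

Lemma ind_sum y : (L <= y < U)%N ->
  \sum_(L.+1 <= t < U) c t * (t <= y)%:R = \sum_(L.+1 <= t < y.+1) c t.
Proof.
move=> /andP[h1 h2].
rewrite (@big_cat_nat _ _ _ y.+1) //=.
have -> : \sum_(y.+1 <= t < U) c t * (t <= y)%:R = 0.
  rewrite big_nat big1 // => t /andP[ht _]; by rewrite leqNgt ht mulr0.
by rewrite addr0 big_nat [RHS]big_nat; apply: eq_bigr => t /andP[_ ht]; rewrite -ltnS ht mulr1.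
Qed.

Lemma Qd i : (L + i < U)%N ->
  g (L + i).+1 - g (L + i) = d + \sum_(L.+1 <= t < (L + i).+1) c t.
Proof.
elim: i => [|i IH] h.
  by rewrite addn0 big_geq // addr0.
rewrite addnS big_nat_recr /=; last by lia.
rewrite addrA -IH; last by lia.
rewrite /c /=; ring.
Qed.

Lemma rep i : (L + i <= U)%N ->
  g (L + i) = g L + d * i%:R + \sum_(L.+1 <= t < U) c t * (L + i - t)%:R.
Proof.
elim: i => [|i IH] h.
  rewrite addn0 mulr0 addr0 big_nat big1 ?addr0 // => t /andP[ht _].
  have -> : (L - t = 0)%N by lia.
  by rewrite mulr0.
have e : forall t, (L + i.+1 - t)%N = ((L + i - t) + (t <= L + i))%N.
  by move=> t; case: (leqP t (L + i)) => /= ?; lia.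
under eq_bigr => t _ do rewrite e natrD mulrDr.
rewrite big_split /= ind_sum; last by lia.
have hq := Qd (i := i); have hi := IH.
rewrite addnS -(addn1 i) natrD.
have h1 : (L + i < U)%N by lia.
have h2 : (L + i <= U)%N by lia.
move: (hq h1) (hi h2); lra.
Qed.

Lemma sumrep (s : seq nat) : {in s, forall x, (L <= x <= U)%N} ->
  \sum_(x <- s) g x = (size s)%:R * g L + d * (\sum_(x <- s) (x - L))%:R
     + \sum_(L.+1 <= t < U) c t * (\sum_(x <- s) (x - t))%:R.
Proof.
elim: s => [|x s IH] hs.
  rewrite !big_nil mul0r mulr0 add0r big1 ?addr0 // => t _; by rewrite big_nil mulr0.
rewrite !big_cons.
under [X in _ = _ + X]eq_bigr => t _ do rewrite big_cons natrD mulrDr.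
rewrite big_split /=.
have /andP[h1 h2] := hs x (mem_head _ _).
have := rep (i := (x - L)%N); rewrite subnKC // => -> ; last by lia.
rewrite IH; last by move=> y hy; apply: hs; rewrite inE hy orbT.
rewrite natrD mulrSr; ring.
Qed.

Lemma karamata (a b : seq nat) :
  size a = size b ->
  {in a, forall x, (L <= x <= U)%N} -> {in b, forall x, (L <= x <= U)%N} ->
  (forall t, (L < t < U)%N -> g t *+ 2 <= g t.-1 + g t.+1) ->
  (\sum_(x <- b) (x - L) = \sum_(x <- a) (x - L))%N ->
  (forall t, (\sum_(x <- b) (x - t) <= \sum_(x <- a) (x - t))%N) ->
  \sum_(x <- b) g x <= \sum_(x <- a) g x.
Proof.
move=> hsz ha hb hc hL hK.
rewrite (sumrep ha) (sumrep hb) hsz hL lerD2l.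
rewrite big_nat [X in _ <= X]big_nat; apply: ler_sum => t /andP[h1 h2].
apply: ler_wpM2l; last by rewrite ler_nat.
rewrite /c; have := hc t; rewrite h1 h2 => /(_ isT); rewrite mulr2n; lra.
Qed.
End K.
Section P.
Variable R : realType.
Implicit Types w : nat -> R.

Lemma prod_exp w (s : seq nat) : {in s, forall x, 0 < w x} ->
  \prod_(x <- s) w x = expR (\sum_(x <- s) ln (w x)).
Proof.
move=> h; rewrite expR_sum; apply: eq_big_seq => x hx.
by rewrite lnK // posrE h.
Qed.

Lemma prod0 w (s : seq nat) x : x \in s -> w x = 0 -> \prod_(j <- s) w j = 0.
Proof.
elim: s => //= y s IH; rewrite inE big_cons => /orP[/eqP <-|hx] hw.
  by rewrite hw mul0r.
by rewrite IH ?mulr0.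
Qed.

Lemma prod_ge0 w (s : seq nat) : (forall s, (1 <= s)%N -> 0 <= w s) ->
  all (fun x => 0 < x)%N s -> 0 <= \prod_(j <- s) w j.
Proof.
move=> hw ha; rewrite big_seq; apply: prodr_ge0 => x hx.
apply: hw; exact: (allP ha).
Qed.

Lemma bounds (a b : seq nat) L U :
  size a = size b -> sumn a = sumn b -> sorted geq b ->
  (forall J, (1 <= J <= size b)%N -> (sumn (take J b) <= sumn (take J a))%N) ->
  {in a, forall x, (L <= x <= U)%N} ->
  [/\ {in b, forall x, (L <= x <= U)%N},
      (\sum_(x <- b) (x - L) = \sum_(x <- a) (x - L))%N &
      (forall t, (\sum_(x <- b) (x - t) <= \sum_(x <- a) (x - t))%N)].
Proof.
move=> hsz hsum hs hJ ha.
have hK := maj_pos hs hJ.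
have hU : all (fun x => x <= U)%N b.
  apply: (maj_up hK); apply/allP => x hx; by case/andP: (ha x hx).
have hL' : all (fun x => L <= x)%N a by apply/allP => x hx; by case/andP: (ha x hx).
have hLb := maj_low hsz hsum hK hL'.
split.
- move=> x hx; by rewrite (allP hLb x hx) (allP hU x hx).
- have e1 := ident a L; have e2 := ident b L.
  have z1 : (\sum_(x <- a) (L - x) = 0)%N.
    apply/eqP; rewrite sum_nat_seq_eq0; apply: sub_all hL' => x /=; by rewrite subn_eq0.
  have z2 : (\sum_(x <- b) (L - x) = 0)%N.
    apply/eqP; rewrite sum_nat_seq_eq0; apply: sub_all hLb => x /=; by rewrite subn_eq0.
  rewrite hsz in e1; lia.
- exact: hK.
Qed.

Lemma gen (w : nat -> R) L U (a b : seq nat) (cvx : bool) :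
  size a = size b -> sumn a = sumn b -> sorted geq b ->
  (forall J, (1 <= J <= size b)%N -> (sumn (take J b) <= sumn (take J a))%N) ->
  {in a, forall x, (L <= x <= U)%N} ->
  (forall x, (L <= x <= U)%N -> 0 < w x) ->
  (forall t, (L < t < U)%N ->
     if cvx then w t ^+ 2 <= w t.-1 * w t.+1 else w t.-1 * w t.+1 <= w t ^+ 2) ->
  if cvx then \prod_(x <- b) w x <= \prod_(x <- a) w x
  else \prod_(x <- a) w x <= \prod_(x <- b) w x.
Proof.
move=> hsz hsum hs hJ ha hpos hc.
have [hb hL hK] := bounds hsz hsum hs hJ ha.
have pa : {in a, forall x, 0 < w x} by move=> x /ha; exact: hpos.
have pb : {in b, forall x, 0 < w x} by move=> x /hb; exact: hpos.
rewrite (prod_exp pa) (prod_exp pb).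
have lnsq : forall t, (L < t < U)%N ->
  ln (w t ^+ 2) = ln (w t) *+ 2 /\ ln (w t.-1 * w t.+1) = ln (w t.-1) + ln (w t.+1).
  move=> t /andP[h1 h2].
  have p0 : 0 < w t by apply: hpos; lia.
  have p1 : 0 < w t.-1 by apply: hpos; lia.
  have p2 : 0 < w t.+1 by apply: hpos; lia.
  by rewrite expr2 !lnM ?posrE // mulr2n.
have pos3 : forall t, (L < t < U)%N ->
  [/\ w t ^+ 2 \in Num.pos, w t.-1 * w t.+1 \in Num.pos & True].
  move=> t /andP[h1 h2].
  have p0 : 0 < w t by apply: hpos; lia.
  have p1 : 0 < w t.-1 by apply: hpos; lia.
  have p2 : 0 < w t.+1 by apply: hpos; lia.
  by rewrite !posrE exprn_gt0 // mulr_gt0.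
case: cvx hc => hc.
- rewrite ler_expR.
  apply: (karamata (g := fun x => ln (w x))) hsz ha hb _ hL hK => t ht.
  have [e1 e2] := lnsq t ht; have [q1 q2 _] := pos3 t ht.
  rewrite -e1 -e2 ler_ln //; exact: hc.
- rewrite ler_expR -lerN2 -!sumrN.
  apply: (karamata (g := fun x => - ln (w x))) hsz ha hb _ hL hK => t ht.
  have [e1 e2] := lnsq t ht; have [q1 q2 _] := pos3 t ht.
  rewrite -opprD mulNrn -e1 -e2 lerN2 ler_ln //; exact: hc.
Qed.
End P.

Section Q.
Variable R : realType.

Lemma all_le1 (s : seq nat) : all (fun x => 0 < x)%N s -> ~~ has (fun x => 2 <= x)%N s ->
  s = nseq (size s) 1%N.
Proof.
elim: s => //= x s IH /andP[h1 h2]; rewrite negb_or => /andP[h3 h4].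
rewrite -IH //; congr (_ :: _); move: h1 h3; lia.
Qed.

Lemma Ink_unpack n k ns : Ink n k ns ->
  [/\ size ns = k, sorted geq ns, all (fun x => 0 < x)%N ns & sumn ns = n].
Proof. by case/and4P => /eqP h1 h2 h3 /eqP h4. Qed.

Lemma pw_cvx (w : nat -> R) n k ns ns' : (0 < k)%N ->
  (forall s, (1 <= s)%N -> 0 <= w s) -> log_convex w ->
  Ink n k ns -> Ink n k ns' -> prec k ns ns' ->
  \prod_(j <- ns') w j <= \prod_(j <- ns) w j.
Proof.
move=> hk hw hlc /Ink_unpack[s1 o1 p1 u1] /Ink_unpack[s2 o2 p2 u2] [hne hJ].
case: (eqVneq (w 2%N) 0) => hw2.
- have hz : forall i, w i.+2 = 0.
    elim=> // i IH.
    have := hlc i.+3 isT; rewrite /= IH mul0r => hle.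
    apply/eqP; rewrite -sqrf_eq0 eq_le hle sqr_ge0; done.
  case: (boolP (has (fun x => 2 <= x)%N ns')) => hh.
  + have [x hx h2] := hasP hh.
    rewrite (prod0 hx); first exact: prod_ge0.
    by case: x hx h2 => [|[|x]] //= _ _; rewrite hz.
  + have e' := all_le1 p2 hh.
    have e : ns = nseq (size ns) 1%N.
      apply: all_one => //; rewrite u1 -u2 s1 -s2 e' size_nseq.
      by elim: (size ns') => //= m ->.
    by move: hne; rewrite e e' s1 s2.
- have w2p : 0 < w 2%N by rewrite lt_neqAle eq_sym hw2 hw.
  have hp : forall i, 0 < w i.+2.
    elim=> // i IH; rewrite lt_neqAle eq_sym hw // andbT; apply/eqP => h0.
    have := hlc i.+2 isT; rewrite /= h0 mulr0 => hle.
    have : 0 < w i.+2 ^+ 2 by rewrite exprn_gt0.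
    by rewrite ltNge hle.
  have w1p : 0 < w 1%N.
    rewrite lt_neqAle eq_sym hw // andbT; apply/eqP => h0.
    have := hlc 2%N isT; rewrite /= h0 mul0r => hle.
    have : 0 < w 2%N ^+ 2 by rewrite exprn_gt0.
    by rewrite ltNge hle.
  have hpos : forall x, (1 <= x)%N -> 0 < w x by case=> [|[|x]].
  have hne' : ns != [::] by rewrite -size_eq0 s1 -lt0n.
  have [L [U [hL hU ha]]] := minmax hne'.
  have L1 : (1 <= L)%N := allP p1 L hL.
  have := @gen R w L U ns ns' true.
  apply=> //.
  + by rewrite s1 s2.
  + by rewrite u1 u2.
  + by move=> J; rewrite s2; exact: hJ.
  + by move=> x hx; exact: (allP ha x hx).
  + move=> x /andP[h1 _]; apply: hpos; exact: leq_trans L1 h1.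
  + move=> t /andP[h1 _]; apply: hlc; exact: leq_ltn_trans L1 h1.
Qed.

Lemma pw_ccv (w : nat -> R) n k ns ns' : (0 < k)%N ->
  (forall s, (1 <= s)%N -> 0 <= w s) -> log_concave w ->
  Ink n k ns -> Ink n k ns' -> prec k ns ns' ->
  \prod_(j <- ns) w j <= \prod_(j <- ns') w j.
Proof.
move=> hk hw [hlc hnz] /Ink_unpack[s1 o1 p1 u1] /Ink_unpack[s2 o2 p2 u2] [hne hJ].
case: (boolP (has (fun x => w x == 0) ns)) => hh.
- have [x hx /eqP h0] := hasP hh.
  rewrite (prod0 hx h0); exact: prod_ge0.
- have pa : forall x, x \in ns -> 0 < w x.
    move=> x hx; rewrite lt_neqAle eq_sym hw ?(allP p1 x hx) // andbT.
    by apply: contra hh => h0; apply/hasP; exists x.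
  have hne' : ns != [::] by rewrite -size_eq0 s1 -lt0n.
  have [L [U [hL hU ha]]] := minmax hne'.
  have L1 : (1 <= L)%N := allP p1 L hL.
  have := @gen R w L U ns ns' false.
  apply=> //.
  + by rewrite s1 s2.
  + by rewrite u1 u2.
  + by move=> J; rewrite s2; exact: hJ.
  + by move=> x hx; exact: (allP ha x hx).
  + move=> x /andP[h1 h2].
    case: (ltngtP L x) => hLx; last by rewrite -hLx; exact: pa hL.
    * case: (ltngtP x U) => hxU; last by rewrite hxU; exact: pa hU.
      -- rewrite lt_neqAle eq_sym hw ?(leq_trans L1 (ltnW hLx)) // andbT.
         apply/eqP => h0; apply: (hnz L x U L1 hLx hxU).
         by split; [exact: pa hL | split; [exact: h0 | exact: pa hU]].
      -- by move: h2; rewrite leqNgt hxU.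
    * by move: h1; rewrite leqNgt hLx.
  + move=> t /andP[h1 _]; apply: hlc; exact: leq_ltn_trans L1 h1.
Qed.
End Q.

Unset Implicit Arguments. Set Strict Implicit. Set Printing Implicit Defensive.

Theorem theorem3p5 (R : realType) (d : measure_display) (T : measurableType d)
  (nu : {measure set T -> \bar R})
  (V : nat -> nat -> T -> R) (W : nat -> T -> R)
  (V_ge0 : forall n k th, (1 <= k <= n)%N -> 0 <= V n k th)
  (W_ge0 : forall s th, (1 <= s)%N -> 0 <= W s th)
  (V_meas : forall n k, (1 <= k <= n)%N -> measurable_fun [set: T] (V n k))
  (W_meas : forall s, (1 <= s)%N -> measurable_fun [set: T] (W s))
  (Pi : forall n, (1 <= n)%N ->
     random_partition_with_EPPF n (gibbs_mixture_eppf nu V W n)) :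
  forall n, (1 <= n)%N ->
    ((forall th, log_convex (fun s => W s th)) ->
       balance_averse n (gibbs_mixture_eppf nu V W n)) /\
    ((forall th, log_concave (fun s => W s th)) ->
       balance_seeking n (gibbs_mixture_eppf nu V W n)).
Proof.
have key : forall n k ns ns', (1 <= k <= n)%N -> Ink n k ns -> Ink n k ns' ->
  (forall th, \prod_(j <- ns') W j th <= \prod_(j <- ns) W j th) ->
  (gibbs_mixture_eppf nu V W n ns' <= gibbs_mixture_eppf nu V W n ns)%E.
  move=> n k ns ns' hk hI hI' hle.
  have [s1 _ p1 _] := Ink_unpack hI; have [s2 _ p2 _] := Ink_unpack hI'.
  rewrite /gibbs_mixture_eppf s1 s2.
  have mf : forall s, all (fun x => 0 < x)%N s ->
      measurable_fun [set: T] (fun th => ((V n k th * \prod_(j <- s) W j th)%:E : \bar R)).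
    move=> s hs; apply/measurable_realfun.measurable_EFinP.
    apply: measurable_realfun.measurable_funM; first exact: V_meas.
    apply: measurable_prod => j hj; apply: W_meas; exact: (allP hs).
  apply: ge0_le_integral => //.
  - move=> th _; rewrite lee_fin; apply: mulr_ge0; first exact: V_ge0.
    by apply: prod_ge0 => // s hs; exact: W_ge0.
  - exact: mf.
  - exact: mf.
  - move=> th _; rewrite lee_fin; apply: ler_wpM2l; first exact: V_ge0.
    exact: hle.
move=> n hn; split => hW k ns ns' hk hI hI' hp.
- apply: (key n k) => // th.
  apply: (pw_cvx (n := n) (k := k)) => //; first by case/andP: hk.
  by move=> s; exact: W_ge0.
- apply: (key n k) => // th.
  apply: (pw_ccv (n := n) (k := k)) => //; first by case/andP: hk.
  by move=> s; exact: W_ge0.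
Qed.
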